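(* Let $\mathcal{M}_X$ be a circular orientable embedding of a connected graph $X$. Let $Y$ be a connected voltage graph of $X$, and let $\mathcal{M}_Y$ be the associated voltage embedding. Let $\rho$ be the partition of the arcs of $Y$ whose classes are the preimages of the arcs of $X$, and let $\widehat L$ be its normalized characteristic matrix. If $U_X$ and $U_Y$ are the vertex-face transition matrices of $\mathcal{M}_X$ and $\mathcal{M}_Y$, then \[U_X=\widehat L^TU_Y\widehat L.\] Consequently, the $H$-digraph of $\mathcal{M}_X$ is a quotient digraph of the $H$-digraph of $\mathcal{M}_Y$.
   Context: Setting. A circular embedding is a cellular embedding in which every face is bounded by a cycle. Arcs are ordered pairs $(u,v)$ with $\{u,v\}$ an edge, and $u$ is the tail. Vertex-face transition matrix. Fix a consistent orientation of the faces, so that each edge shared by two faces receives opposite directions in them; then every arc lies in exactly one facial walk. Let $M$ be the arc-face incidence matrix and $N$ the arc-tail incidence matrix ($N_{(a,b),u}=1$ iff $a=u$). Let $\widehat M,\widehat N$ be these matrices with columns scaled to unit length. The transition matrix is $U=(2\widehat M\widehat M^T-I)(2\widehat N\widehat N^T-I)$. Voltage graph. Let $\Gamma$ be a group of order $r$ and $\phi$ a map from the arcs of $X$ to $\Gamma$ with $\phi(v,u)=\phi(u,v)^{-1}$. The voltage graph $Y=X^\phi$ has vertex set $V(X)\times\Gamma$, with $(u,g)$ adjacent to $(v,g\phi(u,v))$ for each arc $(u,v)$ of $X$. The covering map $\psi(u,g)=u$ is a homomorphism that is a bijection on neighbourhoods. Voltage embedding. The voltage embedding $\mathcal{M}_Y$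 is the orientable embedding of $Y$ whose facial walks are the closed walks into which the preimages under $\psi$ of the (oriented) facial walks of $\mathcal{M}_X$ decompose. Normalized characteristic matrix. The characteristic matrix of a partition has a column for each class, equal to the indicator vector of that class; normalizing scales each column to unit length. $H$-digraph. The principal Hamiltonian of a unitary $V$ with spectral decomposition $\sum\alpha_rF_r$ is $-i\sum\log(\alpha_r)F_r$, with $-\pi<-i\log\alpha_r\le\pi$. The $H$-digraph of an embedding is the weighted digraph on the arcs whose weighted adjacency matrix is the principal Hamiltonian of $U^2$. Quotient digraph. The quotient digraph of a weighted digraph with weighted adjacency matrix $H$, with respect to a partition with normalized characteristic matrix $\widehat L$, is the weighted digraph on the classes with weighted adjacency matrix $\widehat L^TH\widehat L$. *)

(* Defs.v *)
From HB Require Import structures.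
From mathcomp Require Import all_boot all_order all_algebra all_fingroup.
From mathcomp Require Import reals exp trigo.
From mathcomp Require Import complex.
From Stdlib Require Import ClassicalEpsilon.

Set Implicit Arguments.
Unset Strict Implicit.
Unset Printing Implicit Defensive.

Import Order.TTheory GRing.Theory Num.Theory.
Local Open Scope ring_scope.

Definition garc (V : finType) (adj : rel V) : finType :=
  {p : V * V | adj p.1 p.2}.

Definition arc_tail (V : finType) (adj : rel V) (a : garc adj) : V := (val a).1.
Definition arc_head (V : finType) (adj : rel V) (a : garc adj) : V := (val a).2.

(* the reverse arc (v,u) of (u,v); (defaults to a itself if adj is not symmetric) *)
Definition arc_rev (V : finType) (adj : rel V) (a : garc adj) : garc adj :=
  insubd a ((val a).2, (val a).1).

Definition simple_graph (V : finType) (adj : rel V) : Prop :=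
  symmetric adj /\ irreflexive adj.

Definition connected_graph (V : finType) (adj : rel V) : Prop :=
  forall u v : V, connect adj u v.

(* Orientable cellular embeddings, given by a rotation system: rot maps
   each arc (u,v) to the next arc out of u in the cyclic order at u.                                                *)

Definition rotation_system (V : finType) (adj : rel V) (rot : garc adj -> garc adj) : Prop :=
  injective rot /\
  (forall a, arc_tail (rot a) = arc_tail a) /\
  (forall a b, arc_tail a = arc_tail b -> fconnect rot a b).

Definition face_succ (V : finType) (adj : rel V) (rot : garc adj -> garc adj)
  (a : garc adj) : garc adj := rot (arc_rev a).

Definition faces_of (A : finType) (e : rel A) : {set {set A}} :=
  [set [set b | connect e a b] | a : A].

Definition circular (V : finType) (adj : rel V) (e : rel (garc adj)) : Prop :=
  forall F, F \in faces_of e ->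
    (2 < #|F|)%N /\ {in F &, injective (@arc_tail V adj)}.

(* Voltage graphs.  volt u v is the voltage of the arc (u,v) (its values
   on non-arcs are irrelevant).                                         *)

Definition voltage_ok (V : finType) (adj : rel V) (gT : finGroupType)
  (volt : V -> V -> gT) : Prop :=
  forall u v, adj u v -> volt v u = (volt u v)^-1%g.

Definition volt_adj (V : finType) (adj : rel V) (gT : finGroupType)
  (volt : V -> V -> gT) : rel (V * gT) :=
  fun x y => adj x.1 y.1 && (y.2 == (x.2 * volt x.1 y.1)%g).

Lemma volt_adj_cover (V : finType) (adj : rel V) (gT : finGroupType)
  (volt : V -> V -> gT) (p : (V * gT) * (V * gT)) :
  volt_adj adj volt p.1 p.2 -> adj p.1.1 p.2.1.
Proof. by case/andP. Qed.

Definition cover_arc (V : finType) (adj : rel V) (gT : finGroupType)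
  (volt : V -> V -> gT) (b : garc (volt_adj adj volt)) : garc adj :=
  exist _ ((val b).1.1, (val b).2.1) (volt_adj_cover (valP b)).

(* the facial walks of the voltage embedding M_Y: the lifts of the facial
   walks of M_X, i.e. b follows a iff head a = tail b and psi(b) follows psi(a) *)
Definition voltage_face_rel (V : finType) (adj : rel V) (gT : finGroupType)
  (volt : V -> V -> gT) (succX : garc adj -> garc adj) : rel (garc (volt_adj adj volt)) :=
  fun a b => (arc_head a == arc_tail b) &&
             (cover_arc b == succX (cover_arc a)).

(* scale every column of B to unit length (a zero column stays zero) *)
Definition normalize_cols (R : rcfType) m n (B : 'M[R]_(m, n)) : 'M[R]_(m, n) :=
  \matrix_(i, j) (B i j / Num.sqrt (\sum_(k < m) B k j ^+ 2)).

Definition arc_face_mx (R : rcfType) (A : finType) (P : {set {set A}}) :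
  'M[R]_(#|A|, #|P|) :=
  \matrix_(i, j) ((enum_val i \in (enum_val j : {set A})) : nat)%:R.

Definition arc_tail_mx (R : rcfType) (A V : finType) (tail : A -> V) :
  'M[R]_(#|A|, #|V|) :=
  \matrix_(i, j) ((tail (enum_val i) == enum_val j) : nat)%:R.

Definition transition_mx (R : rcfType) (A V : finType) (tail : A -> V)
  (P : {set {set A}}) : 'M[R]_#|A| :=
  let Mh := normalize_cols (arc_face_mx R P) in
  let Nh := normalize_cols (arc_tail_mx R tail) in
  (2%:R *: (Mh *m Mh^T) - 1%:M) *m (2%:R *: (Nh *m Nh^T) - 1%:M).

(* normalized characteristic matrix of the partition rho of the arcs of Y
   whose classes are the preimages psi^{-1}(a), a arc of X (column j
   corresponds to the class of the j-th arc of X) *)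
Definition cover_char_mx (R : rcfType) (V : finType) (adj : rel V) (gT : finGroupType)
  (volt : V -> V -> gT) : 'M[R]_(#|garc (volt_adj adj volt)|, #|garc adj|) :=
  normalize_cols (\matrix_(i, j) ((cover_arc (enum_val i) == enum_val j) : nat)%:R).

Local Open Scope complex_scope.

Definition carg (R : realType) (z : R[i]) : R :=
  epsilon (inhabits 0) (fun t : R => - pi < t <= pi /\
     z = ((ComplexField.Normc.normc z)%:C * (cos t +i* sin t))%C).

Definition clog (R : realType) (z : R[i]) : R[i] :=
  (ln (ComplexField.Normc.normc z) +i* carg z).

Definition ctrmx (R : realType) n (A : 'M[R[i]]_n) : 'M[R[i]]_n :=
  (map_mx (@conjc R) A)^T.

Definition spectral_decomposition (R : realType) n (W : 'M[R[i]]_n)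
  (s : seq R[i]) (F : R[i] -> 'M[R[i]]_n) : Prop :=
  uniq s /\
  (forall a, a \in s -> F a != 0 /\ F a *m F a = F a /\ ctrmx (F a) = F a) /\
  (forall a b, a \in s -> b \in s -> a != b -> F a *m F b = 0) /\
  \sum_(a <- s) F a = 1%:M /\
  W = \sum_(a <- s) a *: F a.

Definition principal_hamiltonian (R : realType) n (W H : 'M[R[i]]_n) : Prop :=
  exists s F, spectral_decomposition W s F /\
    H = \sum_(a <- s) (- 'i * clog a) *: F a.

Definition cmx (R : realType) m n (A : 'M[R]_(m, n)) : 'M[R[i]]_(m, n) :=
  map_mx (fun x => x%:C) A.

(* weighted adjacency matrix of the quotient digraph w.r.t. Lh *)
Definition quotient_mx (R : realType) m n (H : 'M[R[i]]_m) (Lh : 'M[R]_(m, n)) :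
  'M[R[i]]_n := (cmx Lh)^T *m H *m cmx Lh.

Arguments voltage_face_rel {V adj gT} volt succX.
Arguments cover_char_mx R {V adj gT} volt.
Arguments cover_arc {V adj gT} volt b.

(* Main.v *)
Require Import Defs.
From HB Require Import structures.
From mathcomp Require Import all_boot all_order all_algebra all_fingroup.
From mathcomp Require Import reals exp trigo.
From mathcomp Require Import complex.
From mathcomp Require Import ring.
Set Implicit Arguments. Unset Strict Implicit. Unset Printing Implicit Defensive.
Import Order.TTheory GRing.Theory Num.Theory.
Local Open Scope ring_scope.

Section Kmx.
Variable R : rcfType.

Definition kmx (A B : finType) (k : A -> B -> R) : 'M[R]_(#|A|, #|B|) :=
  \matrix_(i, j) k (enum_val i) (enum_val j).

Lemma kmxM (A B C : finType) (k1 : A -> B -> R) (k2 : B -> C -> R) :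
  kmx k1 *m kmx k2 = kmx (fun a c => \sum_b k1 a b * k2 b c).
Proof.
apply/matrixP=> i j; rewrite !mxE.
rewrite (big_enum_val (A := predT) (fun b => k1 (enum_val i) b * k2 b (enum_val j))).
by apply: eq_bigr => l _; rewrite !mxE.
Qed.

Lemma kmxT (A B : finType) (k : A -> B -> R) :
  (kmx k)^T = kmx (fun b a => k a b).
Proof. by apply/matrixP=> i j; rewrite !mxE. Qed.

Lemma kmxP (A B : finType) (k1 k2 : A -> B -> R) :
  (forall a b, k1 a b = k2 a b) -> kmx k1 = kmx k2.
Proof. by move=> h; apply/matrixP=> i j; rewrite !mxE h. Qed.


Lemma sum_delta (A : finType) (x : A) (F : A -> R) :
  \sum_b ((x == b)%:R * F b) = F x.
Proof.
rewrite (bigD1 x) //= eqxx mul1r big1 ?addr0 // => b /negPf.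
by rewrite eq_sym => ->; rewrite mul0r.
Qed.
End Kmx.
Section Face.
Variable R : rcfType.

Lemma sum_ind_card (A : finType) (S : pred A) :
  \sum_x ((S x : nat)%:R : R) = #|S|%:R.
Proof. by rewrite -natr_sum -sum1_card [in RHS]big_mkcond. Qed.

Lemma nat_sq (b : bool) : ((b : nat)%:R : R) ^+ 2 = (b : nat)%:R.
Proof. by case: b; rewrite /= ?(mulr1n, mulr0n, expr1n, expr0n). Qed.

Lemma normsq_div (x y n : R) : 0 <= n ->
  x / Num.sqrt n * (y / Num.sqrt n) = x * y / n.
Proof. by move=> n0; rewrite mulrACA -invfM -expr2 sqr_sqrtr. Qed.

Lemma face_proj (A : finType) (f : A -> A) (finj : injective f) :
  let Mh := normalize_cols (arc_face_mx R (faces_of (frel f))) in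
  Mh *m Mh^T = kmx (fun a b => (fconnect f a b : nat)%:R / (fingraph.order f a)%:R).
Proof.
move=> Mh; apply/matrixP=> i j; rewrite !mxE.
set a := enum_val i; set b := enum_val j.
under eq_bigr => F _.
  rewrite !mxE.
  have -> : \sum_(k < #|A|) (arc_face_mx R (faces_of (frel f))) k F ^+ 2
            = #|enum_val F|%:R.
    under eq_bigr => k _ do rewrite mxE nat_sq.
    by rewrite -(big_enum_val (A := predT) (fun x => ((x \in enum_val F) : nat)%:R)) /= sum_ind_card.
  rewrite normsq_div ?ler0n //.
  over.
rewrite /= -(big_enum_val (fun F : {set A} => ((a \in F) : nat)%:R * ((b \in F) : nat)%:R / #|F|%:R)).
rewrite (bigD1 [set x | fconnect f a x]) /=; last by apply/imsetP; exists a.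
rewrite big1 ?addr0.
  rewrite !inE connect0 mul1r; congr (_ / _); by rewrite cardsE.
move=> F /andP[/imsetP[c _ ->] neF].
case: (boolP (a \in [set x | fconnect f c x])) => [ca|]; last by rewrite !mul0r.
case/eqP: neF; apply/setP=> x; rewrite !inE.
rewrite inE in ca.
apply/idP/idP => h; first by rewrite (connect_trans _ h) // fconnect_sym.
exact: connect_trans ca h.
Qed.
End Face.
Section Avg.
Variable R : rcfType.
Variables (A : finType) (f : A -> A).
Hypothesis finj : injective f.

Lemma sum_traject x n b :
  (\sum_(i < n) (iter i f x == b) = count_mem b (traject f x n))%N.
Proof.
elim: n => [|n IH]; first by rewrite big_ord0.
by rewrite big_ord_recr IH trajectSr -cats1 count_cat /= addn0.
Qed.

Lemma iter_mul_order m x : iter (m * fingraph.order f x) f x = x.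
Proof.
elim: m => [|m IH] //; rewrite mulSn iterD IH; exact: iter_order.
Qed.

Lemma sum_iter_mul m a b :
  (\sum_(k < m * fingraph.order f a) (iter k f a == b) = m * fconnect f a b)%N.
Proof.
elim: m => [|m IH]; first by rewrite mul0n big_ord0.
rewrite mulSnr big_split_ord /= IH mulSnr; congr (_ + _)%N.
under eq_bigr => i _ do rewrite addnC iterD iter_mul_order.
by rewrite sum_traject count_uniq_mem ?orbit_uniq // fconnect_orbit.
Qed.

Lemma orbit_avg N : (forall x, fingraph.order f x %| N)%N -> (0 < N)%N -> forall a b,
  (fconnect f a b : nat)%:R / (fingraph.order f a)%:R
  = (\sum_(k < N) ((iter k f a == b) : nat)%:R) / (N%:R : R).
Proof.
move=> hN N0 a b.
case/dvdnP: (hN a) => q eN; subst N.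
rewrite -natr_sum sum_iter_mul !natrM invfM mulrACA mulfV ?mul1r //.
by rewrite pnatr_eq0 -lt0n; move: N0; rewrite muln_gt0 => /andP[].
Qed.
End Avg.
Section Tail.
Variable R : rcfType.
Variables (A V : finType) (tail : A -> V).

Definition degv (v : V) : R := \sum_c ((tail c == v) : nat)%:R.

Lemma tail_proj :
  let Nh := normalize_cols (arc_tail_mx R tail) in
  Nh *m Nh^T = kmx (fun a b => ((tail a == tail b) : nat)%:R / degv (tail a)).
Proof.
move=> Nh; apply/matrixP=> i j; rewrite !mxE.
set a := enum_val i; set b := enum_val j.
under eq_bigr => v _.
  rewrite !mxE.
  have -> : \sum_(k < #|A|) (arc_tail_mx R tail) k v ^+ 2 = degv (enum_val v).
    under eq_bigr => k _ do rewrite mxE nat_sq.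
    by rewrite -(big_enum_val (A := predT) (fun x => ((tail x == enum_val v) : nat)%:R)).
  rewrite normsq_div; last by apply: sumr_ge0 => c _; exact: ler0n.
  rewrite -mulrA.
  over.
rewrite /= -(big_enum_val (A := predT) (fun v => ((tail a == v) : nat)%:R * (((tail b == v) : nat)%:R / degv v))) /=.
by rewrite sum_delta eq_sym.
Qed.
End Tail.
Section Volt.
Variables (V : finType) (adj : rel V) (gT : finGroupType) (volt : V -> V -> gT).
Variable rot : garc adj -> garc adj.
Hypothesis hsym : symmetric adj.
Hypothesis rinj : injective rot.
Hypothesis rtail : forall a, arc_tail (rot a) = arc_tail a.

Local Notation AX := (garc adj).
Local Notation AY := (garc (volt_adj adj volt)).
Local Notation sX := (face_succ rot).
Local Notation cov := (cover_arc volt).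

Lemma arc_rev_val (a : AX) : val (arc_rev a) = ((val a).2, (val a).1).
Proof. by rewrite insubdK // unfold_in /= hsym (valP a). Qed.

Lemma arc_rev_inj : injective (@arc_rev V adj).
Proof.
move=> a b e; apply: val_inj.
have := congr1 val e; rewrite !arc_rev_val => -[e2 e1].
by rewrite [val a]surjective_pairing [val b]surjective_pairing e1 e2.
Qed.

Lemma sX_inj : injective sX.
Proof. by move=> a b /rinj /arc_rev_inj. Qed.

Lemma sX_tail b : (val (sX b)).1 = (val b).2.
Proof.
have := rtail (arc_rev b); rewrite /arc_tail => ->.
by rewrite arc_rev_val.
Qed.

Definition sY (a : AY) : AY :=
  insubd a ((val a).2, ((val (sX (cov a))).2,
                        ((val a).2.2 * volt (val a).2.1 (val (sX (cov a))).2)%g)).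

Lemma sY_val a : val (sY a) = ((val a).2, ((val (sX (cov a))).2,
                        ((val a).2.2 * volt (val a).2.1 (val (sX (cov a))).2)%g)).
Proof.
rewrite insubdK // unfold_in /volt_adj /= eqxx andbT.
have := valP (sX (cov a)); by rewrite sX_tail.
Qed.

Lemma cov_sY a : cov (sY a) = sX (cov a).
Proof.
apply: val_inj; rewrite /= sY_val /=.
by rewrite [val (sX _)]surjective_pairing sX_tail.
Qed.

Lemma val_cov (c : AY) : val (cov c) = ((val c).1.1, (val c).2.1).
Proof. by []. Qed.

Lemma valY (c : AY) : (val c).2.2 = ((val c).1.2 * volt (val c).1.1 (val c).2.1)%g.
Proof. by have := valP c; rewrite /volt_adj => /andP[_ /eqP]. Qed.

Lemma vfr_sY a b : voltage_face_rel volt sX a b = (b == sY a).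
Proof.
rewrite /voltage_face_rel; apply/andP/eqP => [[/eqP h /eqP hc] | ->].
  apply: val_inj; rewrite sY_val.
  have hb1 : (val b).1 = (val a).2 by exact: esym h.
  rewrite -hc [val b]surjective_pairing [(val b).2]surjective_pairing hb1; congr (_, (_, _)).
  by rewrite valY hb1.
split; last by rewrite cov_sY.
by rewrite /arc_head /arc_tail sY_val.
Qed.

Lemma sY_inj : injective sY.
Proof.
move=> a1 a2 e; have := congr1 val e; rewrite !sY_val => -[h2 hc _].
have ec : sX (cov a1) = sX (cov a2).
  apply: val_inj; rewrite [val (sX (cov a1))]surjective_pairing [val (sX (cov a2))]surjective_pairing.
  by rewrite !sX_tail /= h2 hc.
have := congr1 val (sX_inj ec); rewrite !val_cov => -[e1 _].
have v1 := valY a1; have v2 := valY a2; rewrite h2 e1 in v1.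
have eg : (val a1).1.2 = (val a2).1.2 by apply: (mulIg (volt (val a2).1.1 (val a2).2.1)); exact: (etrans (esym v1) v2).
apply: val_inj.
rewrite [val a1]surjective_pairing [val a2]surjective_pairing h2.
by rewrite [(val a1).1]surjective_pairing [(val a2).1]surjective_pairing e1 eg.
Qed.

Lemma cov_iter k a : cov (iter k sY a) = iter k sX (cov a).
Proof. by elim: k => //= k IH; rewrite cov_sY IH. Qed.
End Volt.
Section Lift.
Variable R : rcfType.
Variables (V : finType) (adj : rel V) (gT : finGroupType) (volt : V -> V -> gT).
Local Notation AX := (garc adj).
Local Notation AY := (garc (volt_adj adj volt)).
Local Notation cov := (cover_arc volt).

Lemma lift_proof (b : AX) g :
  volt_adj adj volt ((val b).1, g) ((val b).2, (g * volt (val b).1 (val b).2)%g).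
Proof. by rewrite /volt_adj /= (valP b) eqxx. Qed.

Definition liftY (b : AX) (g : gT) : AY :=
  exist _ (((val b).1, g), ((val b).2, (g * volt (val b).1 (val b).2)%g)) (lift_proof b g).

Lemma lift_count (b : AX) (v : V * gT) :
  \sum_(c : AY) (((arc_tail c == v) : nat)%:R * ((cov c == b) : nat)%:R : R)
  = ((arc_tail b == v.1) : nat)%:R.
Proof.
case: v => x g /=.
case: (eqVneq (arc_tail b) x) => [<- | ne].
  rewrite -[RHS](sum_delta (liftY b g) (fun _ => 1 : R)) /=.
  apply: eq_bigr => c _; rewrite mulr1 -natrM mulnb; congr ((_ : nat)%:R); congr nat_of_bool.
  apply/idP/idP => [/andP[/eqP ht /eqP hc] | /eqP <-]; last first.
    rewrite /arc_tail /= eqxx /=; apply/eqP/val_inj => /=; by rewrite -surjective_pairing.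
  apply/eqP.
    move: ht hc; case: c => [[[x1 g1] [y1 h1]] pc] ht hc.
    have hb : val b = (x1, y1) by rewrite -hc.
    have hg : g1 = g by case: ht.
    apply: val_inj; rewrite /= hb /= -hg; clear ht hc.
    by move: pc; rewrite /volt_adj /= => /andP[_ /eqP ->].
rewrite big1 // => c _; rewrite -natrM mulnb.
case: andP => [[/eqP ht /eqP hc] | //].
exfalso; move/eqP: ne; apply; rewrite -hc.
by move: ht; rewrite /arc_tail /= => ->.
Qed.

Lemma fiber_count (b : AX) :
  \sum_(c : AY) ((cov c == b) : nat)%:R = (#|gT|%:R : R).
Proof.
transitivity (\sum_(c : AY) \sum_(v : V * gT)
   (((arc_tail c == v) : nat)%:R * ((cov c == b) : nat)%:R : R)).
  by apply: eq_bigr => c _; rewrite sum_delta.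
rewrite exchange_big /=.
under eq_bigr => v _ do rewrite lift_count.
rewrite -(pair_big predT predT (fun x (g : gT) => ((arc_tail b == x) : nat)%:R : R)) /=.
under eq_bigr => x _ do rewrite sumr_const.
rewrite -[RHS](sum_delta (arc_tail b) (fun _ => (#|gT|%:R : R))).
by apply: eq_bigr => x _; rewrite mulr_natr.
Qed.

Lemma degv_lift (x : V) (g : gT) :
  degv R (@arc_tail _ (volt_adj adj volt)) (x, g) = degv R (@arc_tail V adj) x.
Proof.
rewrite /degv.
transitivity (\sum_(c : AY) \sum_(b : AX)
   (((arc_tail c == (x, g)) : nat)%:R * ((cov c == b) : nat)%:R : R)).
  apply: eq_bigr => c _.
  rewrite -[LHS](sum_delta (cov c) (fun _ => ((arc_tail c == (x, g)) : nat)%:R)).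
  by apply: eq_bigr => b _; rewrite mulrC.
rewrite exchange_big /=; apply: eq_bigr => b _.
by rewrite lift_count.
Qed.
End Lift.
Lemma face_proj' (R : rcfType) (A : finType) (f : A -> A) (finj : injective f) :
  normalize_cols (arc_face_mx R (faces_of (frel f))) *m
  (normalize_cols (arc_face_mx R (faces_of (frel f))))^T
  = kmx (fun a b => (fconnect f a b : nat)%:R / (fingraph.order f a)%:R).
Proof. exact: face_proj. Qed.

Lemma tail_proj' (R : rcfType) (A V : finType) (tail : A -> V) :
  normalize_cols (arc_tail_mx R tail) *m (normalize_cols (arc_tail_mx R tail))^T
  = kmx (fun a b => ((tail a == tail b) : nat)%:R / degv R tail (tail a)).
Proof. exact: tail_proj. Qed.

Lemma order_dvd (A : finType) (f : A -> A) n : (#|A| <= n)%N ->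
  forall x, (fingraph.order f x %| n`!)%N.
Proof.
move=> hn x; apply: dvdn_fact; rewrite fingraph.order_gt0 /=.
exact: leq_trans (max_card _) hn.
Qed.

Lemma intertw (R : rcfType) m n (P : 'M[R]_m) (P' : 'M[R]_n) (L : 'M[R]_(m, n)) :
  P *m L = L *m P' -> (2%:R *: P - 1%:M) *m L = L *m (2%:R *: P' - 1%:M).
Proof.
move=> h; by rewrite mulmxBl mulmxBr -scalemxAl h scalemxAr mul1mx mulmx1.
Qed.

Section Main.
Variable R : rcfType.
Variables (V : finType) (adj : rel V) (gT : finGroupType) (volt : V -> V -> gT).
Variable rot : garc adj -> garc adj.
Hypothesis hsym : symmetric adj.
Hypothesis rinj : injective rot.
Hypothesis rtail : forall a, arc_tail (rot a) = arc_tail a.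

Local Notation AX := (garc adj).
Local Notation AY := (garc (volt_adj adj volt)).
Local Notation sX := (face_succ rot).
Local Notation cov := (cover_arc volt).
Local Notation s := (Num.sqrt (#|gT|%:R : R)).

Lemma gT_gt0 : (0 < #|gT|)%N.
Proof. by rewrite -cardsT cardG_gt0. Qed.

Lemma Lh_kmx : @cover_char_mx R V adj gT volt = kmx (fun c b => ((cov c == b) : nat)%:R / s).
Proof.
apply/matrixP => i j; rewrite !mxE; congr (_ / Num.sqrt _).
under eq_bigr => k _ do rewrite mxE nat_sq.
rewrite -(big_enum_val (A := predT) (fun c => ((cov c == enum_val j) : nat)%:R)) /=.
exact: fiber_count.
Qed.

Lemma LtL : (@cover_char_mx R V adj gT volt)^T *m @cover_char_mx R V adj gT volt = 1%:M.
Proof.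
rewrite Lh_kmx kmxT kmxM; apply/matrixP => i j; rewrite !mxE.
under eq_bigr => c _ do rewrite normsq_div ?ler0n //.
transitivity (\sum_c ((cov c == enum_val i) : nat)%:R *
                 (((enum_val i == enum_val j) : nat)%:R / (#|gT|%:R : R))).
  apply: eq_bigr => c _; rewrite mulrA; congr (_ / _).
  case: eqP => [e|_]; last by rewrite !mul0r.
  by rewrite e; case: eqP.
rewrite -mulr_suml fiber_count (inj_eq enum_val_inj).
case: (i == j); last by rewrite mul0r mulr0.
by rewrite mul1r mulfV // pnatr_eq0 -lt0n gT_gt0.
Qed.

Lemma facesY : faces_of (voltage_face_rel volt sX) = faces_of (frel (@sY V adj gT volt rot)).
Proof.
rewrite /faces_of; apply: eq_imset => a; apply/setP => b; rewrite !inE.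
apply: eq_connect => x y; by rewrite vfr_sY // eq_sym.
Qed.

Local Notation Lh := (@cover_char_mx R V adj gT volt).
Local Notation MhX := (normalize_cols (arc_face_mx R (faces_of (frel sX)))).
Local Notation MhY := (normalize_cols (arc_face_mx R (faces_of (voltage_face_rel volt sX)))).
Local Notation NhX := (normalize_cols (arc_tail_mx R (@arc_tail V adj))).
Local Notation NhY := (normalize_cols (arc_tail_mx R (@arc_tail _ (volt_adj adj volt)))).

Lemma PL : (MhY *m MhY^T) *m Lh = Lh *m (MhX *m MhX^T).
Proof.
have iX := sX_inj hsym rinj.
have iY := sY_inj (volt := volt) hsym rinj rtail.
rewrite facesY !face_proj' //.
set N := (#|AX| + #|AY|)`!.
have hNX := order_dvd sX (leq_addr #|AY| #|AX|).
have hNY := order_dvd (@sY V adj gT volt rot) (leq_addl #|AX| #|AY|).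
have N0 : (0 < N)%N by exact: fact_gt0.
have avX := orbit_avg R iX hNX N0.
have avY := orbit_avg R iY hNY N0.
rewrite Lh_kmx !kmxM; apply: kmxP => a b.
under eq_bigr => c _ do rewrite avY.
under [RHS]eq_bigr => c _ do rewrite avX -mulrA.
rewrite sum_delta.
under eq_bigr => c _ do rewrite -mulrA mulr_suml.
rewrite exchange_big /=.
under eq_bigr => k _ do rewrite sum_delta (cov_iter hsym rtail).
rewrite -mulr_sumr -mulr_suml; ring.
Qed.

Lemma QL : (NhY *m NhY^T) *m Lh = Lh *m (NhX *m NhX^T).
Proof.
rewrite !tail_proj' Lh_kmx !kmxM; apply: kmxP => a b.
under [RHS]eq_bigr => c _ do rewrite -mulrA.
rewrite sum_delta.
have hd : degv R (@arc_tail _ (volt_adj adj volt)) (arc_tail a)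
          = degv R (@arc_tail V adj) (arc_tail (cov a)).
  by rewrite [arc_tail a]surjective_pairing degv_lift.
transitivity (\sum_c (((arc_tail c == arc_tail a) : nat)%:R * ((cov c == b) : nat)%:R)
   * ((degv R (@arc_tail _ (volt_adj adj volt)) (arc_tail a))^-1 / s)).
  apply: eq_bigr => c _; rewrite [arc_tail a == _]eq_sym; ring.
rewrite -mulr_suml lift_count hd.
have -> : (arc_tail b == (arc_tail a).1) = (arc_tail (cov a) == arc_tail b) by rewrite eq_sym.
ring.
Qed.

Lemma UL :
  transition_mx R (@arc_tail _ (volt_adj adj volt)) (faces_of (voltage_face_rel volt sX)) *m Lh
  = Lh *m transition_mx R (@arc_tail V adj) (faces_of (frel sX)).
Proof.
rewrite /transition_mx /= -mulmxA (intertw QL) [LHS]mulmxA (intertw PL) mulmxA.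
by [].
Qed.
End Main.
Section Spec.
Variable R : realType.
Local Open Scope complex_scope.

Lemma spec_quot m n (Wx : 'M[R[i]]_n) (Wy : 'M[R[i]]_m) (L : 'M[R[i]]_(m, n))
  s F t G (h : R[i] -> R[i]) :
  L^T *m L = 1%:M -> Wy *m L = L *m Wx ->
  spectral_decomposition Wx s F -> spectral_decomposition Wy t G ->
  \sum_(a <- s) h a *: F a = L^T *m (\sum_(b <- t) h b *: G b) *m L.
Proof.
move=> LL WL [us [Fp [Fo [F1 WxE]]]] [ut [Gp [Go [G1 WyE]]]].
have GW : forall b, b \in t -> G b *m Wy = b *: G b.
  move=> b bt; rewrite WyE mulmx_sumr (bigD1_seq b) //= -scalemxAr (Gp b bt).2.1.
  rewrite big1_seq ?addr0 // => c /andP[cb ct].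
  by rewrite -scalemxAr Go ?scaler0 // eq_sym.
have WF : forall a, a \in s -> Wx *m F a = a *: F a.
  move=> a aS; rewrite WxE mulmx_suml (bigD1_seq a) //= -scalemxAl (Fp a aS).2.1.
  rewrite big1_seq ?addr0 // => c /andP[ca cs].
  by rewrite -scalemxAl Fo ?scaler0.
have Z : forall a b, a \in s -> b \in t -> a != b -> G b *m L *m F a = 0.
  move=> a b aS bt ne.
  have : (b - a) *: (G b *m L *m F a) = 0.
    apply/eqP; rewrite scalerBl subr_eq0; apply/eqP.
    rewrite [LHS]scalemxAl scalemxAl -(GW b bt) [RHS]scalemxAr -(WF a aS).
    by rewrite -[G b *m Wy *m L]mulmxA WL !mulmxA.
  move/eqP; rewrite scaler_eq0 subr_eq0 eq_sym (negbTE ne) /=.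
  by move/eqP.
have S : forall a, a \in s ->
    \sum_(b <- t) h b *: (G b *m L *m F a) = h a *: (L *m F a).
  move=> a aS.
  transitivity (\sum_(b <- t) h a *: (G b *m L *m F a)).
    rewrite big_seq [RHS]big_seq; apply: eq_bigr => b bt.
    by case: (eqVneq a b) => [-> //| ne]; rewrite Z // !scaler0.
  by rewrite -scaler_sumr -!mulmx_suml G1 mul1mx.
rewrite -[RHS]mulmx1 -F1 mulmx_sumr big_seq [RHS]big_seq.
apply: eq_bigr => a aS.
rewrite -!mulmxA mulmx_suml.
under eq_bigr => b _ do rewrite -scalemxAl mulmxA.
by rewrite S // scalemxAr mulmxA LL mul1mx.
Qed.

Lemma cmxM m n p (A : 'M[R]_(m, n)) (B : 'M[R]_(n, p)) :
  cmx (A *m B) = cmx A *m cmx B.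
Proof. exact: map_mxM. Qed.

Lemma cmxT m n (A : 'M[R]_(m, n)) : cmx A^T = (cmx A)^T.
Proof. by apply/matrixP => i j; rewrite !mxE. Qed.

Lemma cmx1 n : cmx (1%:M : 'M[R]_n) = 1%:M.
Proof. exact: map_mx1. Qed.
End Spec.
Unset Implicit Arguments.
Theorem theorem6p2
  (R : realType) (V : finType) (adj : rel V)
  (rot : garc adj -> garc adj)
  (gT : finGroupType) (volt : V -> V -> gT) :
  (* X is a connected simple graph *)
  simple_graph adj -> connected_graph adj ->
  (* M_X : an orientable (rotation-system) embedding of X, which is circular *)
  rotation_system rot ->
  circular (frel (face_succ rot)) ->
  (* Y = X^phi is a connected voltage graph of X *)
  voltage_ok adj volt ->
  connected_graph (volt_adj adj volt) ->
  let UX := transition_mx R (@arc_tail V adj) (faces_of (frel (face_succ rot))) in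
  let UY := transition_mx R (@arc_tail _ (volt_adj adj volt))
              (faces_of (voltage_face_rel volt (face_succ rot))) in
  let Lh := cover_char_mx R volt in
  UX = Lh^T *m UY *m Lh /\
  (forall HX HY,
     principal_hamiltonian (cmx (UX ^+ 2)) HX ->
     principal_hamiltonian (cmx (UY ^+ 2)) HY ->
     HX = quotient_mx HY Lh).
Proof.
move=> [hsym _] _ [rinj [rtail _]] _ _ _ UX UY Lh.
have hUL : UY *m Lh = Lh *m UX by apply: UL.
have hLL : Lh^T *m Lh = 1%:M by apply: LtL.
split; first by rewrite -mulmxA hUL mulmxA hLL mul1mx.
move=> HX HY [s [F [dX ->]]] [t [G [dY ->]]].
rewrite /quotient_mx; apply: spec_quot dX dY.
  by rewrite -cmxT -cmxM hLL cmx1.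
rewrite -!cmxM; congr cmx.
rewrite !expr2 -!mulmxE.
by rewrite -mulmxA hUL mulmxA hUL -mulmxA.
Qed.
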